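(* Let $Q$ be a faithful quandle, $S$ a set and $\theta:Q\times Q\to\mathrm{Sym}_S$ a quandle cocycle. Then $Q\times_\theta S\cong Q\times_{\mathbf{1}}S$ if and only if $\theta$ is cohomologous to the trivial cocycle $\mathbf{1}$.
   Context: A quandle is a set $Q$ with a binary operation $*$ such that every left translation $L_x:y\mapsto x*y$ is bijective, $x*(y*z)=(x*y)*(x*z)$ and $x*x=x$. $Q$ is faithful if $L_x=L_y$ implies $x=y$. A quandle cocycle with values in $\mathrm{Sym}_S$ is $\theta:Q\times Q\to\mathrm{Sym}_S$ with $\theta_{x*y,x*z}\theta_{x,z}=\theta_{x,y*z}\theta_{y,z}$ and $\theta_{x,x}=1$; $\theta$ is cohomologous to $\mathbf{1}$ (the cocycle constantly equal to the identity) if there is $\gamma:Q\to\mathrm{Sym}_S$ with $\theta_{x,y}=\gamma_{x*y}\gamma_y^{-1}$ for all $x,y$. $Q\times_\theta S$ is the quandle on $Q\times S$ with $(x,a)*(y,b)=(x*y,\theta_{x,y}(b))$. *)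

(* Defs.v *)
From mathcomp Require Import ssreflect ssrfun ssrbool.
Set Implicit Arguments. Unset Strict Implicit. Unset Printing Implicit Defensive.

Definition is_quandle (Q : Type) (op : Q -> Q -> Q) : Prop :=
  [/\ (forall x : Q, bijective (op x)),
      (forall x y z : Q, op x (op y z) = op (op x y) (op x z))
    & (forall x : Q, op x x = x)].

Definition faithful_quandle (Q : Type) (op : Q -> Q -> Q) : Prop :=
  forall x y : Q, op x =1 op y -> x = y.

Definition is_cocycle (Q S : Type) (op : Q -> Q -> Q) (theta : Q -> Q -> S -> S)
  : Prop :=
  [/\ (forall x y : Q, bijective (theta x y)),
      (forall x y z : Q,
         theta (op x y) (op x z) \o theta x z =1 theta x (op y z) \o theta y z)
    & (forall x : Q, theta x x =1 id)].

Definition triv_cocycle (Q S : Type) : Q -> Q -> S -> S := fun _ _ => id.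

Definition cohomologous_to_trivial (Q S : Type) (op : Q -> Q -> Q)
  (theta : Q -> Q -> S -> S) : Prop :=
  exists (gamma gammainv : Q -> S -> S),
    [/\ (forall x : Q, cancel (gamma x) (gammainv x)),
        (forall x : Q, cancel (gammainv x) (gamma x))
      & (forall x y : Q, theta x y =1 gamma (op x y) \o gammainv y)].

Definition ext_op (Q S : Type) (op : Q -> Q -> Q) (theta : Q -> Q -> S -> S)
  (p q : Q * S) : Q * S :=
  (op p.1 q.1, theta p.1 q.1 q.2).

Definition quandle_isomorphic (A B : Type) (opA : A -> A -> A) (opB : B -> B -> B)
  : Prop :=
  exists f : A -> B, bijective f /\ forall p q : A, f (opA p q) = opB (f p) (f q).

(* Main.v *)
Require Import Defs.
From mathcomp Require Import ssreflect ssrfun ssrbool.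

Theorem lemma2p5 (Q S : Type) (op : Q -> Q -> Q) (theta : Q -> Q -> S -> S)
  (hQ : is_quandle op) (hF : faithful_quandle op) (htheta : is_cocycle op theta) :
  quandle_isomorphic (ext_op op theta) (ext_op op (@triv_cocycle Q S))
  <-> cohomologous_to_trivial op theta.
Proof.
split.
- move=> [f [[finv fK finvK] hom]].
  have homE : forall x a y b, f (op x y, theta x y b) =
      (op (f (x, a)).1 (f (y, b)).1, (f (y, b)).2).
    by move=> x a y b; rewrite -[(op x y, _)]/(ext_op op theta (x, a) (y, b)) hom.
  have A : forall x a b, (f (x, a)).1 = (f (x, b)).1.
    move=> x a b; apply: hF => z.
    have := homE x a (finv (z, a)).1 (finv (z, a)).2.
    rewrite (homE x b (finv (z, a)).1 (finv (z, a)).2) -surjective_pairing finvK /=.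
    by case.
  pose gammainv x b := (f (x, b)).2.
  pose gamma x c := (finv ((f (x, c)).1, c)).2.
  have B : forall x c, (finv ((f (x, c)).1, c)).1 = x.
    move=> x c; set p := finv _.
    have fp : f p = ((f (x, c)).1, c) by rewrite /p finvK.
    apply: hF => z.
    have e : f (ext_op op theta p (z, c)) = f (ext_op op theta (x, c) (z, c)).
      by rewrite !hom fp.
    by have := congr1 finv e; rewrite !fK /ext_op /=; case.
  have gK : forall x, cancel (gammainv x) (gamma x).
    move=> x b; rewrite /gamma /gammainv.
    by rewrite -(A x b) -surjective_pairing fK.
  have gKi : forall x, cancel (gamma x) (gammainv x).
    move=> x c; rewrite /gamma /gammainv.
    set p := finv _.
    have -> : (x, p.2) = p by rewrite [p]surjective_pairing B.
    by rewrite /p finvK.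
  exists gamma, gammainv; split => // x y b /=.
  have e : gammainv (op x y) (theta x y b) = gammainv y b.
    by rewrite /gammainv (homE x b y b).
  by rewrite -e gK.
- move=> [gamma [gammainv [gK gKi th]]].
  exists (fun p => (p.1, gammainv p.1 p.2)); split.
    exists (fun p => (p.1, gamma p.1 p.2)) => [[x a]|[x a]] /=; by rewrite ?gK ?gKi.
  move=> [x a] [y b]; rewrite /ext_op /triv_cocycle /= th /= gK //.
Qed.
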